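(* Let $G$ be a non-cyclic simple dimension group admitting a trace with rational values, i.e. a nonzero homomorphism $\tau:G\to\mathbb R$ with $\tau(G^+)\ge0$ and $\tau(G)\subseteq\mathbb Q$. Then $G$ is globally irrationally miscible.
   Context: A dimension group is an unperforated partially ordered abelian group with the Riesz interpolation property; simple means no nontrivial order ideals (then every nonzero positive element is an order unit). For an order unit $u$, $S(G,u)$ is the set of states (homomorphisms $\sigma:G\to\mathbb R$, $\sigma(G^+)\ge0$, $\sigma(u)=1$); $J(G,u)=\{g:\sigma\mapsto\sigma(g)\text{ constant on }S(G,u)\}$ and $\Phi(g)$ is the constant. $(G,u)$ is irrationally miscible if $\Phi(J(G,u))\subseteq\mathbb Q$; $G$ is globally irrationally miscible if $(G,u)$ is irrationally miscible for every order unit $u$. *)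

(* Defs.v *)
From Stdlib Require Import Rdefinitions.
From HB Require Import structures.
From mathcomp Require Import all_boot all_order all_algebra.
From mathcomp Require Import Rstruct.
Set Implicit Arguments. Unset Strict Implicit. Unset Printing Implicit Defensive.
Import Order.TTheory GRing.Theory Num.Theory.
Local Open Scope ring_scope.

(* A partially ordered abelian group is a zmodType G together with a
   positive cone P : G -> Prop. *)
Section PoGroups.
Variable G : zmodType.
Variable P : G -> Prop.

Definition po_le (x y : G) : Prop := P (y - x).

Definition is_pogroup : Prop :=
  [/\ P 0, (forall x y, P x -> P y -> P (x + y)) &
      (forall x, P x -> P (- x) -> x = 0)].

Definition unperforated : Prop :=
  forall (n : nat) (x : G), (0 < n)%N -> P (x *+ n) -> P x.

Definition riesz_interpolation : Prop :=
  forall a1 a2 b1 b2 : G,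
    po_le a1 b1 -> po_le a1 b2 -> po_le a2 b1 -> po_le a2 b2 ->
    exists c, [/\ po_le a1 c, po_le a2 c, po_le c b1 & po_le c b2].

Definition dimension_group : Prop :=
  [/\ is_pogroup, unperforated & riesz_interpolation].

Definition order_ideal (I : G -> Prop) : Prop :=
  [/\ I 0, (forall x y, I x -> I y -> I (x - y)),
      (forall a b, P a -> po_le a b -> I b -> I a) &
      (forall x, I x -> exists a b, [/\ I a, P a, I b, P b & x = a - b])].

Definition simple_pogroup : Prop :=
  forall I, order_ideal I -> (forall x, I x -> x = 0) \/ (forall x, I x).

Definition order_unit (u : G) : Prop :=
  P u /\ forall x : G, exists n : nat, po_le x (u *+ n).

Definition is_hom (s : G -> R) : Prop := forall x y, s (x + y) = s x + s y.

Definition is_state (u : G) (s : G -> R) : Prop :=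
  [/\ is_hom s, (forall x, P x -> 0 <= s x) & s u = 1].

Definition in_J (u : G) (g : G) : Prop :=
  forall s1 s2, is_state u s1 -> is_state u s2 -> s1 g = s2 g.

Definition is_rational (r : R) : Prop := exists q : rat, r = ratr q.

(* Phi(J(G,u)) is contained in Q: the common value of the states on any
   g in J(G,u) is rational *)
Definition irrationally_miscible (u : G) : Prop :=
  forall g, in_J u g -> forall s, is_state u s -> is_rational (s g).

Definition globally_irrationally_miscible : Prop :=
  forall u, order_unit u -> irrationally_miscible u.

Definition rational_trace (tau : G -> R) : Prop :=
  [/\ is_hom tau, (exists x, tau x <> 0), (forall x, P x -> 0 <= tau x) &
      (forall x, is_rational (tau x))].

End PoGroups.

Definition cyclic_group (G : zmodType) : Prop :=
  exists g : G, forall x : G, exists z : int, x = g *~ z.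

(* Main.v *)
Require Import Defs.
From Stdlib Require Import Rdefinitions.
From HB Require Import structures.
From mathcomp Require Import all_boot all_order all_algebra.
From mathcomp Require Import Rstruct.
Import Order.TTheory GRing.Theory Num.Theory.
Local Open Scope ring_scope.

Lemma hom0 (G : zmodType) (t : G -> R) : is_hom t -> t 0 = 0.
Proof.
move=> h; have := h 0 0; rewrite addr0 => e.
by apply: (addrI (t 0)); rewrite addr0 -e.
Qed.

Lemma homN (G : zmodType) (t : G -> R) : is_hom t -> forall x, t (- x) = - t x.
Proof.
move=> h x; apply/eqP; rewrite -subr_eq0 opprK -h addNr; exact/eqP/hom0.
Qed.

Lemma homMn (G : zmodType) (t : G -> R) : is_hom t -> forall x n, t (x *+ n) = t x *+ n.
Proof.
move=> h x; elim=> [|n IH]; first by rewrite !mulr0n hom0.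
by rewrite !mulrS h IH.
Qed.

Theorem mainTheorem13 (G : zmodType) (P : G -> Prop) :
  dimension_group P -> simple_pogroup P -> ~ cyclic_group G ->
  (exists tau : G -> R, rational_trace P tau) ->
  globally_irrationally_miscible P.
Proof.
move=> _ _ _ [tau [htau [x0 hx0] hpos hrat]] u [Pu hu] g hg s hs.
have tu0 : 0 <= tau u by apply: hpos.
have le x : exists n, tau x <= tau u *+ n.
  case: (hu x) => n hn; exists n.
  have := hpos _ hn; rewrite /po_le htau homN // homMn // subr_ge0 //.
have tup : 0 < tau u.
  rewrite lt_neqAle tu0 andbT; apply/negP => /eqP e.
  apply: hx0; apply/eqP; rewrite eq_le; apply/andP; split.
    by have [n] := le x0; rewrite -e mul0rn.
  by have [n] := le (- x0); rewrite -e mul0rn homN // oppr_le0.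
pose s' := fun x => tau x / tau u.
have hs' : is_state P u s'.
  split.
  - by move=> x y; rewrite /s' htau mulrDl.
  - by move=> x Px; rewrite /s' divr_ge0 // hpos.
  - by rewrite /s' divff // gt_eqF.
rewrite (hg s s' hs hs') /s'.
case: (hrat g) => q1 ->; case: (hrat u) => q2 ->.
exists (q1 / q2). rewrite (fmorph_div (@ratr R)). done.
Qed.
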